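(* The theory $\mathcal{T}+\mathrm{IND}(\mathrm{Literal}(\mathcal{T}))$ proves the (universal closures of the) formulas $x\neq0\to x=s(p(x))$, $x+y=y+x$, $(x+y)+z=x+(y+z)$, and $x+y=x+z\to y=z$.
   Context: Language $\{0/0,s/1,p/1,+/2\}$; $\mathcal{T}$ has axioms (universally closed) $0\neq s(x)$, $p(0)=0$, $p(s(x))=x$, $x+0=x$, $x+s(y)=s(x+y)$. $\mathrm{Literal}(\mathcal{T})$ is the set of literals (atoms and negated atoms) of this language. $I_x\varphi=\forall\vec z(\varphi(0,\vec z)\wedge\forall x(\varphi(x,\vec z)\to\varphi(s(x),\vec z))\to\forall x\varphi(x,\vec z))$ and $\mathrm{IND}(\Gamma)=\{I_x\gamma:\gamma\in\Gamma\}$. *)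

(* Defs.v *)
From Stdlib Require Import List Arith.
Import ListNotations.

Inductive term : Type :=
| var : nat -> term
| zero : term
| succ : term -> term
| pred : term -> term
| plus : term -> term -> term.

Inductive form : Type :=
| Eq : term -> term -> form
| Bot : form
| Imp : form -> form -> form
| And : form -> form -> form
| Or : form -> form -> form
| All : form -> form
| Ex : form -> form.

Definition Neg (A : form) : form := Imp A Bot.

Fixpoint tsubst (sigma : nat -> term) (t : term) : term :=
  match t with
  | var n => sigma n
  | zero => zero
  | succ u => succ (tsubst sigma u)
  | pred u => pred (tsubst sigma u)
  | plus u v => plus (tsubst sigma u) (tsubst sigma v)
  end.

Definition tshift (t : term) : term := tsubst (fun k => var (S k)) t.

Definition up (sigma : nat -> term) : nat -> term :=
  fun n => match n with 0 => var 0 | S k => tshift (sigma k) end.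

Fixpoint fsubst (sigma : nat -> term) (A : form) : form :=
  match A with
  | Eq s t => Eq (tsubst sigma s) (tsubst sigma t)
  | Bot => Bot
  | Imp B C => Imp (fsubst sigma B) (fsubst sigma C)
  | And B C => And (fsubst sigma B) (fsubst sigma C)
  | Or B C => Or (fsubst sigma B) (fsubst sigma C)
  | All B => All (fsubst (up sigma) B)
  | Ex B => Ex (fsubst (up sigma) B)
  end.

Definition inst (t : term) : nat -> term :=
  fun n => match n with 0 => t | S k => var k end.

Definition shift (A : form) : form := fsubst (fun k => var (S k)) A.

Inductive ND : list form -> form -> Prop :=
| nd_ax G A : In A G -> ND G A
| nd_impI G A B : ND (A :: G) B -> ND G (Imp A B)
| nd_impE G A B : ND G (Imp A B) -> ND G A -> ND G B
| nd_andI G A B : ND G A -> ND G B -> ND G (And A B)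
| nd_andE1 G A B : ND G (And A B) -> ND G A
| nd_andE2 G A B : ND G (And A B) -> ND G B
| nd_orI1 G A B : ND G A -> ND G (Or A B)
| nd_orI2 G A B : ND G B -> ND G (Or A B)
| nd_orE G A B C : ND G (Or A B) -> ND (A :: G) C -> ND (B :: G) C -> ND G C
| nd_raa G A : ND (Neg A :: G) Bot -> ND G A
| nd_allI G A : ND (map shift G) A -> ND G (All A)
| nd_allE G A t : ND G (All A) -> ND G (fsubst (inst t) A)
| nd_exI G A t : ND G (fsubst (inst t) A) -> ND G (Ex A)
| nd_exE G A B : ND G (Ex A) -> ND (A :: map shift G) (shift B) -> ND G B
| nd_refl G t : ND G (Eq t t)
| nd_leibniz G A s t :
    ND G (Eq s t) -> ND G (fsubst (inst s) A) -> ND G (fsubst (inst t) A).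

Definition Provable (Th : form -> Prop) (A : form) : Prop :=
  exists G : list form, (forall B, In B G -> Th B) /\ ND G A.

(* universal closure: bound on free variables, then prefix that many foralls *)
Fixpoint tbound (t : term) : nat :=
  match t with
  | var n => S n
  | zero => 0
  | succ u => tbound u
  | pred u => tbound u
  | plus u v => Nat.max (tbound u) (tbound v)
  end.

Fixpoint fbound (A : form) : nat :=
  match A with
  | Eq s t => Nat.max (tbound s) (tbound t)
  | Bot => 0
  | Imp B C | And B C | Or B C => Nat.max (fbound B) (fbound C)
  | All B | Ex B => Nat.pred (fbound B)
  end.

Fixpoint alls (n : nat) (A : form) : form :=
  match n with 0 => A | S k => All (alls k A) end.

Definition closure (A : form) : form := alls (fbound A) A.

Definition v0 := var 0.
Definition v1 := var 1.
Definition v2 := var 2.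

Inductive T_ax : form -> Prop :=
| T1 : T_ax (closure (Neg (Eq zero (succ v0))))
| T2 : T_ax (Eq (pred zero) zero)
| T3 : T_ax (closure (Eq (pred (succ v0)) v0))
| T4 : T_ax (closure (Eq (plus v0 zero) v0))
| T5 : T_ax (closure (Eq (plus v1 (succ v0)) (succ (plus v1 v0)))).

Inductive is_literal : form -> Prop :=
| lit_pos s t : is_literal (Eq s t)
| lit_neg s t : is_literal (Neg (Eq s t)).

(* induction axiom on variable 0 (= x); other free variables are parameters *)
Definition succ_at0 : nat -> term :=
  fun n => match n with 0 => succ (var 0) | S k => var (S k) end.

Definition ind_body (phi : form) : form :=
  Imp (And (fsubst (inst zero) phi) (All (Imp phi (fsubst succ_at0 phi))))
      (All phi).

Definition I_ax (phi : form) : form := closure (ind_body phi).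

Definition IND_Literal (A : form) : Prop :=
  exists phi, is_literal phi /\ A = I_ax phi.

Definition T_IND_Lit (A : form) : Prop := T_ax A \/ IND_Literal A.

(* Main.v *)
Require Import Defs.
From Stdlib Require Import List Arith Lia.
Import ListNotations.

Lemma tsubst_comp s1 s2 t : tsubst s1 (tsubst s2 t) = tsubst (fun n => tsubst s1 (s2 n)) t.
Proof. induction t; simpl; congruence. Qed.
Lemma inst_shift u t : tsubst (inst u) (tshift t) = t.
Proof. unfold tshift. rewrite tsubst_comp. change (tsubst var t = t). induction t; simpl; congruence. Qed.

Lemma allE' G A t B : ND G (All A) -> fsubst (inst t) A = B -> ND G B.
Proof. intros H <-. apply nd_allE; auto. Qed.
Lemma leib' G A s t B C : ND G (Eq s t) -> fsubst (inst s) A = B -> fsubst (inst t) A = C -> ND G B -> ND G C.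
Proof. intros H <- <- H2. eapply nd_leibniz; eauto. Qed.
Lemma sym G s t : ND G (Eq s t) -> ND G (Eq t s).
Proof. intros H. eapply (leib' G (Eq (var 0) (tshift s)) s t); [exact H | | | apply nd_refl]; simpl; rewrite inst_shift; reflexivity. Qed.
Lemma trans G s t u : ND G (Eq s t) -> ND G (Eq t u) -> ND G (Eq s u).
Proof. intros H1 H2. eapply (leib' G (Eq (tshift s) (var 0)) t u); [exact H2 | | | exact H1]; simpl; rewrite inst_shift; reflexivity. Qed.
Lemma congS G s t : ND G (Eq s t) -> ND G (Eq (succ s) (succ t)).
Proof. intros H. eapply (leib' G (Eq (succ (tshift s)) (succ (var 0))) s t); [exact H | | | apply nd_refl]; simpl; rewrite inst_shift; reflexivity. Qed.
Lemma congP G s t : ND G (Eq s t) -> ND G (Eq (pred s) (pred t)).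
Proof. intros H. eapply (leib' G (Eq (pred (tshift s)) (pred (var 0))) s t); [exact H | | | apply nd_refl]; simpl; rewrite inst_shift; reflexivity. Qed.
Lemma congL G s t u : ND G (Eq s t) -> ND G (Eq (plus s u) (plus t u)).
Proof. intros H. eapply (leib' G (Eq (plus (tshift s) (tshift u)) (plus (var 0) (tshift u))) s t); [exact H | | | apply nd_refl]; simpl; rewrite !inst_shift; reflexivity. Qed.
Lemma congR G s t u : ND G (Eq s t) -> ND G (Eq (plus u s) (plus u t)).
Proof. intros H. eapply (leib' G (Eq (plus (tshift u) (tshift s)) (plus (tshift u) (var 0))) s t); [exact H | | | apply nd_refl]; simpl; rewrite !inst_shift; reflexivity. Qed.
Lemma cut G A B : ND G A -> ND (A :: G) B -> ND G B.
Proof. intros H1 H2. eapply nd_impE; [apply nd_impI; exact H2 | exact H1]. Qed.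
Lemma indE G base step concl : ND G (Imp (And base step) concl) -> ND G base -> ND G step -> ND G concl.
Proof. intros H1 H2 H3. eapply nd_impE; [exact H1 | apply nd_andI; auto]. Qed.

Definition ax3 := closure (Eq (pred (succ v0)) v0).
Definition ax4 := closure (Eq (plus v0 zero) v0).
Definition ax5 := closure (Eq (plus v1 (succ v0)) (succ (plus v1 v0))).

Lemma useA3 G t : In ax3 G -> ND G (Eq (pred (succ t)) t).
Proof. intros H. eapply allE'. apply nd_ax, H. reflexivity. Qed.
Lemma useA4 G t : In ax4 G -> ND G (Eq (plus t zero) t).
Proof. intros H. eapply allE'. apply nd_ax, H. reflexivity. Qed.
Lemma useA5 G t1 t2 : In ax5 G -> ND G (Eq (plus t1 (succ t2)) (succ (plus t1 t2))).
Proof. intros H. eapply (allE' _ _ t2). eapply (allE' _ _ t1). apply nd_ax, H. reflexivity.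
  cbn [fsubst tsubst inst up v0 v1]. rewrite inst_shift. reflexivity. Qed.

Definition I1 := I_ax (Neg (Eq v0 v1)).
Definition IL1 := I_ax (Eq (plus zero v0) v0).
Definition IL2 := I_ax (Eq (plus (succ v1) v0) (succ (plus v1 v0))).
Definition IC := I_ax (Eq (plus v0 v1) (plus v1 v0)).
Definition IA := I_ax (Eq (plus (plus v1 v2) v0) (plus v1 (plus v2 v0))).
Definition IK := I_ax (Neg (Eq (plus v1 v0) (plus v2 v0))).
Definition G0 := [ax3; ax4; ax5; I1; IL1; IL2; IC; IA; IK].

Lemma G0_ok : forall B, In B G0 -> T_IND_Lit B.
Proof.
  intros B HB; simpl in HB.
  repeat destruct HB as [<- | HB]; try contradiction;
  first [left; unfold ax3, ax4, ax5; constructor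
        | right; eexists; split; [constructor | reflexivity]].
Qed.

Lemma shift_G0 : map shift G0 = G0.
Proof. reflexivity. Qed.

Ltac hyp := apply nd_ax; repeat (first [apply in_eq | apply in_cons]).
Ltac inG0 := unfold G0; repeat (first [apply in_eq | apply in_cons]).
Lemma inAll G X A t B : In X G -> X = All A -> fsubst (inst t) A = B -> ND G B.
Proof. intros H -> <-. apply nd_allE, nd_ax, H. Qed.
Lemma inX G X A : In X G -> X = A -> ND G A.
Proof. intros H <-. apply nd_ax, H. Qed.
Ltac allI := apply nd_allI; cbn [map]; rewrite ?shift_G0; cbv [shift tshift fsubst tsubst up Neg v0 v1 v2 inst succ_at0].

Lemma part1 : ND G0 (closure (Imp (Neg (Eq v0 zero)) (Eq v0 (succ (pred v0))))).
Proof.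
  change (ND G0 (All (Imp (Neg (Eq v0 zero)) (Eq v0 (succ (pred v0)))))).
  allI.
  apply nd_impI. apply nd_raa.
  eapply nd_impE; [| apply (nd_refl _ v0)].
  eapply (allE' _ (Neg (Eq v0 v1)) v0); [| reflexivity].
  eapply indE.
  - eapply (inAll _ I1 _ v0); [inG0 | reflexivity | reflexivity].
  - simpl. apply nd_impI. apply (nd_impE _ (Eq v0 zero)); [hyp | apply sym; hyp].
  - simpl. allI. apply nd_impI, nd_impI.
    apply (nd_impE _ (Eq (var 1) (succ (pred (var 1))))); [hyp|].
    apply sym. eapply trans; [apply congS | hyp].
    eapply trans; [apply congP, sym; hyp | apply useA3; inG0].
Qed.

Lemma inclc (a : form) G G' : incl G G' -> incl (a :: G) (a :: G').
Proof. intros H x [<-|Hx]; [left; auto | right; auto]. Qed.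

Lemma weaken G A : ND G A -> forall G', incl G G' -> ND G' A.
Proof.
  induction 1; intros G' HG.
  - apply nd_ax; auto.
  - apply nd_impI. apply IHND. apply inclc; auto.
  - eapply nd_impE; eauto.
  - apply nd_andI; eauto.
  - eapply nd_andE1; eauto.
  - eapply nd_andE2; eauto.
  - apply nd_orI1; eauto.
  - apply nd_orI2; eauto.
  - eapply nd_orE; [eauto | apply IHND2 | apply IHND3]; apply inclc; auto.
  - apply nd_raa. apply IHND. apply inclc; auto.
  - apply nd_allI. apply IHND. apply incl_map; auto.
  - apply nd_allE; auto.
  - eapply nd_exI; eauto.
  - eapply nd_exE; [eauto|]. apply IHND2. apply inclc, incl_map; auto.
  - apply nd_refl.
  - eapply nd_leibniz; eauto.
Qed.

Lemma inst2 G A t1 t2 : ND G (All (All A)) -> ND G (fsubst (inst t2) (fsubst (up (inst t1)) A)).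
Proof. intros H. apply nd_allE. apply (nd_allE _ (All A) t1). exact H. Qed.

Definition L1f := All (Eq (plus zero v0) v0).
Definition L2f := All (All (Eq (plus (succ v1) v0) (succ (plus v1 v0)))).
Definition Cf := closure (Eq (plus v0 v1) (plus v1 v0)).

Lemma L1 : ND G0 L1f.
Proof.
  unfold L1f. eapply indE; [eapply (inX _ IL1); [inG0 | reflexivity] | |].
  - simpl. apply useA4; inG0.
  - allI. apply nd_impI. eapply trans; [apply useA5; inG0 | apply congS; hyp].
Qed.

Lemma L2 : ND G0 L2f.
Proof.
  unfold L2f. allI.
  eapply indE; [eapply (inAll _ IL2 _ v0); [inG0 | reflexivity | reflexivity] | |].
  - simpl. eapply trans; [apply useA4; inG0 | apply sym, congS, useA4; inG0].
  - allI. apply nd_impI.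
    eapply trans; [apply useA5; inG0|].
    eapply trans; [apply congS; hyp|].
    apply sym, congS, useA5; inG0.
Qed.

Ltac incl0 := first [apply incl_refl | apply incl_tl; incl0].

Lemma useL1 G t : incl G0 G -> ND G (Eq (plus zero t) t).
Proof. intros H. eapply (allE' _ _ t). apply (weaken _ _ L1 _ H). reflexivity. Qed.
Lemma useL2 G t1 t2 : incl G0 G -> ND G (Eq (plus (succ t1) t2) (succ (plus t1 t2))).
Proof. intros H. pose proof (inst2 _ _ t1 t2 (weaken _ _ L2 _ H)) as K.
  cbn [fsubst tsubst inst up v0 v1] in K. rewrite inst_shift in K. exact K. Qed.

Lemma Comm : ND G0 Cf.
Proof.
  change (ND G0 (All (All (Eq (plus v0 v1) (plus v1 v0))))).
  allI.
  eapply indE; [eapply (inAll _ IC _ v0); [inG0 | reflexivity | reflexivity] | |].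
  - simpl. eapply trans; [apply useL1; incl0 | apply sym, useA4; inG0].
  - allI. apply nd_impI.
    eapply trans; [apply useL2; incl0|].
    eapply trans; [apply congS; hyp|].
    apply sym, useA5; inG0.
Qed.

Lemma useC G t1 t2 : incl G0 G -> ND G (Eq (plus t1 t2) (plus t2 t1)).
Proof. intros H. pose proof (inst2 _ _ t2 t1 (weaken _ _ Comm _ H)) as K.
  cbn [fsubst tsubst inst up v0 v1] in K. rewrite inst_shift in K. exact K. Qed.

Lemma Assoc : ND G0 (closure (Eq (plus (plus v0 v1) v2) (plus v0 (plus v1 v2)))).
Proof.
  change (ND G0 (All (All (All (Eq (plus (plus v0 v1) v2) (plus v0 (plus v1 v2))))))).
  allI. allI. allI.
  eapply (allE' _ _ v2).
  eapply indE; [eapply (allE' _ _ v0); [eapply (inAll _ IA _ v1); [inG0 | reflexivity | reflexivity] | reflexivity] | |].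
  - simpl. eapply trans; [apply useA4; inG0 | apply sym, congR, useA4; inG0].
  - allI. apply nd_impI.
    eapply trans; [apply useA5; inG0|].
    eapply trans; [apply congS; hyp|].
    eapply trans; [apply sym, useA5; inG0|].
    apply congR, sym, useA5; inG0.
  - reflexivity.
Qed.

Lemma Canc : ND G0 (closure (Imp (Eq (plus v0 v1) (plus v0 v2)) (Eq v1 v2))).
Proof.
  change (ND G0 (All (All (All (Imp (Eq (plus v0 v1) (plus v0 v2)) (Eq v1 v2)))))).
  allI. allI. allI.
  apply nd_impI, nd_raa.
  apply (nd_impE _ (Eq (plus v1 v0) (plus v2 v0))).
  - eapply (allE' _ _ v0).
    eapply indE; [eapply (allE' _ _ v1); [eapply (inAll _ IK _ v2); [inG0 | reflexivity | reflexivity] | reflexivity] | |].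
    + simpl. apply nd_impI. apply (nd_impE _ (Eq v1 v2)); [hyp|].
      eapply trans; [apply sym, useA4; inG0|].
      eapply trans; [hyp | apply useA4; inG0].
    + allI. apply nd_impI, nd_impI.
      apply (nd_impE _ (Eq (plus (var 2) (var 0)) (plus (var 3) (var 0)))); [hyp|].
      eapply trans; [apply sym, useA3; inG0|].
      eapply trans; [apply congP, sym, useA5; inG0|].
      eapply trans; [apply congP; hyp|].
      eapply trans; [apply congP, useA5; inG0|].
      apply useA3; inG0.
    + reflexivity.
  - eapply trans; [apply useC; incl0|].
    eapply trans; [hyp | apply useC; incl0].
Qed.

Theorem lemma19 :
  Provable T_IND_Lit (closure (Imp (Neg (Eq v0 zero)) (Eq v0 (succ (pred v0))))) /\
  Provable T_IND_Lit (closure (Eq (plus v0 v1) (plus v1 v0))) /\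
  Provable T_IND_Lit (closure (Eq (plus (plus v0 v1) v2) (plus v0 (plus v1 v2)))) /\
  Provable T_IND_Lit (closure (Imp (Eq (plus v0 v1) (plus v0 v2)) (Eq v1 v2))).
Proof.
  split; [|split; [|split]]; exists G0; split; try exact G0_ok.
  - exact part1.
  - exact Comm.
  - exact Assoc.
  - exact Canc.
Qed.
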